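(* Let $\mathcal P_s$ be the strong-identification parameter space defined below. Then $\inf_{(\theta,F)\in\mathcal P_s}\tau_{\min}(A_F)>0$, where $\tau_{\min}(A_F)$ denotes the smallest singular value of $A_F$.
   Context: General MTE setup. Observables are $(Y,D,Z)$ with $Y\in\mathbb R$, $D\in\{0,1\}$, $Z$ discrete with support $\{z_0,\dots,z_K\}$. Fix an integer $M\ge1$ and known continuous functions $h_1,\dots,h_M$ on $(0,1)$; set $\lambda_{10}=\lambda_{00}\equiv1$ and for $m=1,\dots,M$, $p\in(0,1)$: $\lambda_{1m}(p)=\frac1p\int_0^p h_m(u)du$, $\lambda_{0m}(p)=\frac1{1-p}\int_p^1 h_m(u)du$. For $p=(p(z_0),\dots,p(z_K))'\in(0,1)^{K+1}$ let $A_d(p)$ be the $(K+1)\times(M+1)$ matrix with $(\ell,m)$ entry $\lambda_{dm}(p(z_\ell))$ ($\ell=0,\dots,K$; $m=0,\dots,M$), and $A(p)=\mathrm{diag}(A_1(p),A_0(p))\in\mathbb R^{2(K+1)\times 2(M+1)}$. Parameters: $\theta=(\theta_1',\theta_0')'$, $\theta_d=(\theta_{d0},\dots,\theta_{dM})'=(\mu_d,\rho_{d1},\dots,\rho_{dM})'$. For a distribution $F$ of $(Y,D,Z)$: $q_F(z_\ell)=P_F(Z=z_\ell)$, $p_F(z_\ell)=P_F(D=1\mid Z=z_\ell)$, $p_F=(p_F(z_0),\dots,p_F(z_K))'$, $\beta_{F,d\ell}=E_F[Y\mid D=d,Z=z_\ell]$, $\beta_{F,d}=(\beta_{F,d0},\dots,\beta_{F,dK})'$,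 $\beta_F=(\beta_{F,1}',\beta_{F,0}')'$, $\sigma^2_{F,d\ell}=\mathrm{Var}_F(Y\mid D=d,Z=z_\ell)$, $A_F=A(p_F)$. Parameter space: fix $\delta,\zeta>0$, $\epsilon\in(0,1/2)$ and a compact $\Theta\subset\mathbb R^{2(M+1)}$ with nonempty interior. $\mathcal P$ is the set of pairs $(\theta,F)$ such that (i) $K\ge M$, $\theta\in\mathrm{int}(\Theta)$ and $A_F\theta=\beta_F$; (ii) $\sup_{d\in\{0,1\}}\sup_{\ell}E_F[|Y|^{2+\delta}\mid D=d,Z=z_\ell]\le\zeta$; (iii) $\epsilon\le p_F(z_\ell)\le 1-\epsilon$ for all $\ell$; (iv) $\epsilon\le q_F(z_\ell)\le1-\epsilon$ for all $\ell$; (v) $\sigma^2_{F,d\ell}\ge\epsilon$ for all $d,\ell$. Strong-identification parameter space: $\mathcal P_s$ is the set of $(\theta,F)\in\mathcal P$ (same $\delta,\zeta,\epsilon$) such that the families $\{\lambda_{1m}\}_{m=0}^M$ and $\{\lambda_{0m}\}_{m=0}^M$ are each unisolvent on $(0,1)$ (a set of $n$ functions $f_1,\dots,f_n$ is unisolvent on $\Omega$ if for any $n$ distinct points $x_1,\dots,x_n\in\Omega$ the matrix $(f_i(x_j))$ has nonzero determinant), and there exists an index set $\mathcal S\subseteq\{0,\dots,K\}$ with $|\mathcal S|=M+1$ and $\min_{j,k\in\mathcal S,j\ne k}|p_F(z_j)-p_F(z_k)|\ge\epsilon$. *)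

(* Defs.v *)
From HB Require Import structures.
From mathcomp Require Import all_boot all_order all_algebra.
From mathcomp Require Import all_classical all_reals all_analysis.
Import Order.TTheory GRing.Theory Num.Theory.
Unset Printing Implicit Defensive.
Local Open Scope classical_set_scope.
Local Open Scope ring_scope.

Section MTEDefs.
Variable R : realType.

Definition lam (h : nat -> R -> R) (d : bool) (m : nat) (p : R) : R :=
  if m == 0%N then 1
  else if d then p^-1 * Rintegral lebesgue_measure [set u : R | 0 < u < p] (h m)
  else (1 - p)^-1 * Rintegral lebesgue_measure [set u : R | p < u < 1] (h m).

Definition Ad (h : nat -> R -> R) (M K : nat) (d : bool) (p : 'I_K.+1 -> R)
  : 'M[R]_(K.+1, M.+1) :=
  \matrix_(l < K.+1, m < M.+1) lam h d m (p l).

Definition Amat (h : nat -> R -> R) (M K : nat) (p : 'I_K.+1 -> R)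
  : 'M[R]_(K.+1 + K.+1, M.+1 + M.+1) :=
  block_mx (Ad h M K true p) 0 0 (Ad h M K false p).

Definition sv_min (r c : nat) (A : 'M[R]_(r, c)) : R :=
  inf [set Num.sqrt a | a in [set a : R | eigenvalue (A^T *m A) a]].

Definition unisolvent (n : nat) (f : 'I_n -> R -> R) : Prop :=
  forall x : 'I_n -> R, injective x -> (forall j, 0 < x j < 1) ->
    \det (\matrix_(i < n, j < n) f i (x j)) != 0.

(* A distribution F of (Y,D,Z), Z with support {z_0,...,z_K}, is encoded by
   q l = P(Z = z_l), p l = P(D = 1 | Z = z_l) and the conditional laws
   mu d l of Y given D = d, Z = z_l. *)
Definition is_dist (K : nat) (q p : 'I_K.+1 -> R) : Prop :=
  (forall l, 0 <= q l) /\ \sum_l q l = 1 /\ (forall l, 0 <= p l <= 1).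

Definition cmean (mu : probability R R) : R := Rintegral mu setT (fun y => y).

Definition cvar (mu : probability R R) : R :=
  Rintegral mu setT (fun y => (y - cmean mu) ^+ 2).

Definition betaF (K : nat) (mu : bool -> 'I_K.+1 -> probability R R)
  : 'cV[R]_(K.+1 + K.+1) :=
  col_mx (\col_(l < K.+1) cmean (mu true l)) (\col_(l < K.+1) cmean (mu false l)).

Definition Ps (h : nat -> R -> R) (M K : nat) (delta zeta eps : R)
  (Theta : set 'cV[R]_(M.+1 + M.+1)) (theta : 'cV[R]_(M.+1 + M.+1))
  (q p : 'I_K.+1 -> R) (mu : bool -> 'I_K.+1 -> probability R R) : Prop :=
  is_dist K q p /\
  (M <= K)%N /\ interior (Theta : set 'cV[R^o]_(M.+1 + M.+1)) theta /\
  Amat h M K p *m theta = betaF K mu /\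
  (forall d l, (\int[mu d l]_y ((`|y| `^ (2 + delta))%:E) <= zeta%:E)%E) /\
  (forall l, eps <= p l <= 1 - eps) /\
  (forall l, eps <= q l <= 1 - eps) /\
  (forall d l, eps <= cvar (mu d l)) /\
  unisolvent M.+1 (fun m : 'I_M.+1 => lam h true m) /\
  unisolvent M.+1 (fun m : 'I_M.+1 => lam h false m) /\
  (exists S : {set 'I_K.+1}, #|S| = M.+1 /\
     {in S &, forall j k, j != k -> eps <= `|p j - p k|}).

End MTEDefs.

(* Main.v *)
Require Import Defs.
From HB Require Import structures.
From mathcomp Require Import all_boot all_order all_algebra.
From mathcomp Require Import all_classical all_reals all_analysis.
From mathcomp Require Import complex.
From mathcomp Require spectral.
From mathcomp Require Import ring lra.
From mathcomp Require Import fingroup perm.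
Import Order.TTheory GRing.Theory Num.Theory.
Import numFieldNormedType.Exports.
Set Implicit Arguments.
Unset Strict Implicit.
Local Open Scope classical_set_scope.
Local Open Scope ring_scope.
Section Eig.
Variable R : rcfType.

Lemma ReD_ (u w : R[i]) : complex.Re (u + w) = complex.Re u + complex.Re w.
Proof. by case: u; case: w. Qed.
Lemma ImD_ (u w : R[i]) : complex.Im (u + w) = complex.Im u + complex.Im w.
Proof. by case: u; case: w. Qed.
Lemma ReMr_ (u : R[i]) r : complex.Re (u * (r%:C)%C) = complex.Re u * r.
Proof. by case: u => u1 u2 /=; rewrite mulr0 subr0. Qed.
Lemma ImMr_ (u : R[i]) r : complex.Im (u * (r%:C)%C) = complex.Im u * r.
Proof. by case: u => u1 u2 /=; rewrite mulr0 add0r. Qed.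
Lemma ReM_ (u w : R[i]) : complex.Re (u * w) =
  complex.Re u * complex.Re w - complex.Im u * complex.Im w.
Proof. by case: u; case: w. Qed.
Lemma ImM_ (u w : R[i]) : complex.Im (u * w) =
  complex.Re u * complex.Im w + complex.Im u * complex.Re w.
Proof. by case: u => u1 u2; case: w => w1 w2 /=; rewrite addrC. Qed.

Lemma Re_sum_ (I : Type) (r : seq I) (F : I -> R[i]) :
  complex.Re (\sum_(i <- r) F i) = \sum_(i <- r) complex.Re (F i).
Proof.
elim: r => [|i r IH]; first by rewrite !big_nil.
by rewrite !big_cons ReD_ IH.
Qed.
Lemma Im_sum_ (I : Type) (r : seq I) (F : I -> R[i]) :
  complex.Im (\sum_(i <- r) F i) = \sum_(i <- r) complex.Im (F i).
Proof.
elim: r => [|i r IH]; first by rewrite !big_nil.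
by rewrite !big_cons ImD_ IH.
Qed.

Definition sdot n (u w : 'rV[R]_n) : R := (u *m w^T) 0 0.

Lemma sdotC n (u w : 'rV[R]_n) : sdot u w = sdot w u.
Proof.
by rewrite /sdot -[in LHS](trmxK (u *m w^T)) mxE trmx_mul trmxK.
Qed.

Lemma sdot_ge0 n (u : 'rV[R]_n) : 0 <= sdot u u.
Proof.
rewrite /sdot mxE; apply: sumr_ge0 => i _; rewrite mxE -expr2; exact: sqr_ge0.
Qed.

Lemma sdot_eq0 n (u : 'rV[R]_n) : sdot u u = 0 -> u = 0.
Proof.
rewrite /sdot mxE => /eqP; rewrite psumr_eq0; last first.
  by move=> i _; rewrite mxE -expr2 sqr_ge0.
move=> /allP H; apply/rowP => j; rewrite mxE.
have := H j (mem_index_enum _); rewrite mxE -expr2 sqrf_eq0 => /eqP.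
by [].
Qed.



Lemma sdotBl n (u1 u2 w : 'rV[R]_n) (x y : R) :
  sdot (x *: u1 - y *: u2) w = x * sdot u1 w - y * sdot u2 w.
Proof. by rewrite /sdot mulmxBl -!scalemxAl !mxE. Qed.
Lemma sdotDl n (u1 u2 w : 'rV[R]_n) (x y : R) :
  sdot (x *: u1 + y *: u2) w = x * sdot u1 w + y * sdot u2 w.
Proof. by rewrite /sdot mulmxDl -!scalemxAl !mxE. Qed.

Lemma sdot_sym n (B : 'M[R]_n) (u w : 'rV[R]_n) : B^T = B ->
  sdot (u *m B) w = sdot (w *m B) u.
Proof.
move=> BT; rewrite /sdot -[in LHS](trmxK (u *m B *m w^T)) mxE.
by rewrite !trmx_mul trmxK BT mulmxA.
Qed.

Lemma sym_eig n (B : 'M[R]_n) : (0 < n)%N -> B^T = B -> exists a, eigenvalue B a.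
Proof.
move=> n0 BT.
pose B' := map_mx (real_complex R) B.
have [z /eigenvalueP [v vB vn0]] := spectral.eigenvalue_closed B' n0.
pose a := map_mx (@complex.Re R) v; pose b := map_mx (@complex.Im R) v.
pose x := complex.Re z; pose y := complex.Im z.
have e1 : a *m B = x *: a - y *: b.
  apply/rowP => k; move/rowP: vB => /(_ k); rewrite /B' !mxE => /(f_equal (@complex.Re R)).
  rewrite Re_sum_ ReM_ => H; rewrite -H; apply: eq_bigr => j _; rewrite !mxE ReMr_ //.
have e2 : b *m B = x *: b + y *: a.
  apply/rowP => k; move/rowP: vB => /(_ k); rewrite /B' !mxE => /(f_equal (@complex.Im R)).
  rewrite Im_sum_ ImM_ => H; rewrite -H; apply: eq_bigr => j _; rewrite !mxE ImMr_ //.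
have hy : y * (sdot a a + sdot b b) = 0.
  have := sdot_sym a b BT; rewrite e1 e2 sdotBl sdotDl (sdotC b a).
  move=> /eqP; rewrite -subr_eq0 => /eqP H.
  by rewrite -[LHS]opprK -[RHS]oppr0 -H; ring.
have ab : (a != 0) || (b != 0).
  apply: contraNT vn0; rewrite negb_or !negbK => /andP[/eqP a0 /eqP b0].
  apply/eqP/rowP => k; move/rowP: a0 => /(_ k); move/rowP: b0 => /(_ k).
  rewrite !mxE; case: (v 0 k) => p1 p2 /= -> ->; by [].
have y0 : y = 0.
  move/eqP: hy; rewrite mulf_eq0 => /orP[/eqP //|]; rewrite paddr_eq0 ?sdot_ge0 //.
  move=> /andP[/eqP /sdot_eq0 a0 /eqP /sdot_eq0 b0].
  by move: ab; rewrite a0 b0 eqxx.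
exists x; apply/eigenvalueP; case/orP: ab => [an0|bn0].
  by exists a => //; rewrite e1 y0 scale0r subr0.
by exists b => //; rewrite e2 y0 scale0r addr0.
Qed.

End Eig.

Lemma sq_sum_le (R : realFieldType) n (a : 'I_n -> R) :
  (\sum_i a i) ^+ 2 <= n%:R * \sum_i a i ^+ 2.
Proof.
set S := \sum_i a i; set Q := \sum_i a i ^+ 2.
have H : 0 <= \sum_i \sum_j (a i - a j) ^+ 2.
  by apply: sumr_ge0 => i _; apply: sumr_ge0 => j _; exact: sqr_ge0.
have E1 i : \sum_j (a i - a j) ^+ 2 = a i ^+ 2 *+ n + Q - 2 * a i * S.
  transitivity (\sum_j (a i ^+ 2 + a j ^+ 2 - 2 * a i * a j)).
    by apply: eq_bigr => j _; ring.
  by rewrite sumrB big_split /= sumr_const card_ord mulr_sumr.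
have E : \sum_i \sum_j (a i - a j) ^+ 2 = 2 * (n%:R * Q - S ^+ 2).
  transitivity (\sum_i (a i ^+ 2 *+ n + Q - 2 * a i * S)).
    by apply: eq_bigr => k _; exact: E1.
  rewrite sumrB big_split /= sumr_const card_ord -sumrMnl -mulr_suml -mulr_sumr.
  rewrite sumrMnl -/S -/Q -[Q *+ n]mulr_natl; ring.
move: H; rewrite E; nra.
Qed.

Section Cont.
Variable R : realType.
Variable T : topologicalType.

Lemma cont_cst (c : R) (t : T) : {for t, continuous (fun _ : T => c)}.
Proof. exact: cvg_cst. Qed.

Lemma cont_mul (f g : T -> R) t : {for t, continuous f} -> {for t, continuous g} ->
  {for t, continuous (fun s => f s * g s)}.
Proof. exact: continuousM. Qed.

Lemma cont_sum (I : Type) (r : seq I) (P : pred I) (F : I -> T -> R) t :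
  (forall i, P i -> {for t, continuous (F i)}) ->
  {for t, continuous (fun s => \sum_(i <- r | P i) F i s)}.
Proof.
move=> H; elim: r => [|i r IH].
  rewrite (_ : (fun _ => _) = fun _ => 0); first exact: cont_cst.
  by apply: funext => s; rewrite big_nil.
case Pi : (P i).
  rewrite (_ : (fun _ => _) = (F i + fun s => \sum_(j <- r | P j) F j s)).
    exact: continuousD (H i Pi) IH.
  by apply: funext => s; rewrite big_cons Pi.
rewrite (_ : (fun _ => _) = (fun s => \sum_(j <- r | P j) F j s)) //.
by apply: funext => s; rewrite big_cons Pi.
Qed.

Lemma cont_prod (I : Type) (r : seq I) (P : pred I) (F : I -> T -> R) t :
  (forall i, P i -> {for t, continuous (F i)}) ->
  {for t, continuous (fun s => \prod_(i <- r | P i) F i s)}.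
Proof.
move=> H; elim: r => [|i r IH].
  rewrite (_ : (fun _ => _) = fun _ => 1); first exact: cont_cst.
  by apply: funext => s; rewrite big_nil.
case Pi : (P i).
  rewrite (_ : (fun _ => _) = (F i \* fun s => \prod_(j <- r | P j) F j s)).
    exact: continuousM (H i Pi) IH.
  by apply: funext => s; rewrite big_cons Pi.
rewrite (_ : (fun _ => _) = (fun s => \prod_(j <- r | P j) F j s)) //.
by apply: funext => s; rewrite big_cons Pi.
Qed.

Lemma cont_det n (N : T -> 'M[R]_n) t :
  (forall i j, {for t, continuous (fun s => N s i j)}) ->
  {for t, continuous (fun s => \det (N s))}.
Proof.
move=> H; rewrite (_ : (fun _ => _) = fun s =>
  \sum_(p : 'S_n) ((-1) ^+ p * \prod_i N s i (p i))).
  apply: cont_sum => p _.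
  apply: cont_mul; [exact: cont_cst | exact: cont_prod].
by apply: funext => s.
Qed.

Lemma cont_cofactor n (N : T -> 'M[R]_n) t i j :
  (forall i j, {for t, continuous (fun s => N s i j)}) ->
  {for t, continuous (fun s => cofactor (N s) i j)}.
Proof.
move=> H; rewrite /cofactor.
apply: cont_mul; first exact: cont_cst.
apply: cont_det => k l.
rewrite (_ : (fun _ => _) = fun s => N s (lift i k) (lift j l)) //.
by apply: funext => s; rewrite !mxE.
Qed.

End Cont.

Section Compact.
Variable R : realType.

Lemma cont_bounded n (D : set 'rV[R]_n) (f : 'rV[R]_n -> R) : compact D ->
  (forall x, D x -> {for x, continuous f}) ->
  exists B : R, forall x, D x -> `|f x| <= B.
Proof.
move=> cD cf.
have wc : {within D, continuous f}.
  by apply: continuous_in_subspaceT => x /set_mem Dx; exact: cf.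
have := compact_bounded (continuous_compact wc cD).
move=> [B [_ HB]]; exists (B + 1) => x Dx.
by apply: (HB (B + 1)); [rewrite ltrDl ltr01 | exists x].
Qed.

Definition Dset (eps : R) n : set 'rV[R]_n :=
  [set x | (forall i, eps <= x 0 i <= 1 - eps) /\
           (forall i j, i != j -> eps <= `|x 0 i - x 0 j|)].

Lemma Dset_compact eps n : compact (@Dset eps n).
Proof.
apply: (@subclosed_compact _ _ [set v : 'rV[R]_n | forall i, `[eps, 1 - eps]%classic (v 0 i)]).
- pose C (k : 'I_n * 'I_n) : set 'rV[R]_n :=
    ((fun v : 'rV[R]_n => v 0 k.1) @^-1` ([set r | eps <= r] `&` [set r | r <= 1 - eps])) `&`
    ((fun v : 'rV[R]_n => `|v 0 k.1 - v 0 k.2|) @^-1`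
        (if k.1 == k.2 then setT else [set r | eps <= r])).
  rewrite (_ : @Dset eps n = \bigcap_(k in setT) C k).
    apply: closed_bigI => k _; apply: closedI.
      apply: preimage_closed.
        by move=> v _; exact: coord_continuous.
      by apply: closedI; [exact: closed_ge | exact: closed_le].
    apply: preimage_closed.
      move=> v _; apply: (continuous_comp (f := fun v : 'rV[R]_n => v 0 k.1 - v 0 k.2)).
        by apply: continuousB; exact: coord_continuous.
      exact: norm_continuous.
    by case: ifP => _; [exact: closedT | exact: closed_ge].
  apply/seteqP; split.
    move=> x [H1 H2] [i j] _; split => /=; first by have /andP[] := H1 i.
    by case: eqP => //= /eqP; exact: H2.
  move=> x H; split.
    by move=> i; have [[/= ? ?] _] := H (i, i) I; apply/andP.
  move=> i j ij; have [_ /=] := H (i, j) I.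
  by rewrite (negbTE ij).
- by apply: (@rV_compact _ _ (fun=> `[eps, 1 - eps]%classic)) => _; exact: segment_compact.
- by move=> x [H1 _] i /=; rewrite in_itv /=; exact: H1.
Qed.

End Compact.
Section Lam.
Variable R : realType.
Notation mu := (@lebesgue_measure R).
Variable h : nat -> R -> R.

Definition Fint (m : nat) (p : R) : R :=
  (\int[mu]_(t in [set` Interval (BRight 0) (BRight p)]) h m t)%R.

Definition Lam (d : bool) (m : nat) (p : R) : R :=
  if m == 0%N then 1
  else if d then p^-1 * Fint m p
  else (1 - p)^-1 * ((\int[mu]_(t in [set` Interval (BRight 0) (BLeft 1)]) h m t)%R - Fint m p).

Lemma set_oo (a b : R) : [set x : R | a < x < b] = [set` Interval (BRight a) (BLeft b)].
Proof. by apply/seteqP; split => x; rewrite /= in_itv. Qed.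

Variable M : nat.
Hypothesis hint : forall m, (1 <= m <= M)%N ->
     lebesgue_measure.-integrable [set x : R | 0 < x < 1] (EFin \o h m).
Hypothesis hcont : forall m, (1 <= m <= M)%N ->
     {within [set x : R^o | 0 < x < 1], continuous (h m : R^o -> R^o)}.

Lemma lam_eq d m p : (m <= M)%N -> 0 < p < 1 -> lam R h d m p = Lam d m p.
Proof.
move=> mM /andP[p0 p1]; rewrite /lam /Lam; case: eqP => // /eqP m0.
have m1 : (1 <= m <= M)%N by rewrite lt0n m0.
have hi := hint m1; rewrite set_oo in hi.
case: d.
  rewrite set_oo /Fint Rintegral_itv_bndo_bndc //.
  apply: integrableS hi => //; apply: subset_itvl; rewrite bnd_simp; exact: ltW.
rewrite set_oo /Fint Rintegral_itvB // bnd_simp; exact: ltW.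
Qed.

Lemma Fint_cont m p : (1 <= m <= M)%N -> 0 < p < 1 -> {for p, continuous (Fint m)}.
Proof.
move=> m1 /andP[p0 p1].
have hc : {for p, continuous (h m)}.
  have := hcont m1; rewrite continuous_open_subspace; last first.
    by rewrite set_oo; exact: itv_open.
  by move=> /(_ p); apply; apply/mem_set; rewrite /= p0 p1.
have [] := @continuous_FTC1 R (h m) (BRight 0) p ((p + 1) / 2) _ _ _ hc.
- lra.
- have hi := hint m1; rewrite set_oo in hi; apply: integrableS hi => //.
  apply: subset_itvl; rewrite bnd_simp; lra.
- by [].
move=> dF _; apply: differentiable_continuous; rewrite -derivable1_diffP; exact: dF.
Qed.

Lemma Lam_cont d m p : (m <= M)%N -> 0 < p < 1 -> {for p, continuous (Lam d m)}.
Proof.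
move=> mM /andP[p0 p1]; rewrite /Lam; case: eqP => [_|/eqP m0].
  exact: cvg_cst.
have m1 : (1 <= m <= M)%N by rewrite lt0n m0.
have Fc := Fint_cont m1 (introT andP (conj p0 p1)).
case: d.
  apply: continuousM => //; apply: continuousV; first by rewrite gt_eqF.
  exact: cvg_id.
apply: continuousM.
  apply: continuousV; first by rewrite subr_eq0 gt_eqF.
  apply: continuousB; [exact: cvg_cst | exact: cvg_id].
apply: continuousB => //; exact: cvg_cst.
Qed.



Variable eps : R.
Hypothesis eps0 : 0 < eps.
Hypothesis eps1 : eps < 2^-1.

Lemma eps2 : eps * 2 < 1.
Proof.
have := eps1; rewrite -(@ltr_pM2r _ 2) // mulVf //.
Qed.

Definition G (d : bool) (x : 'rV[R]_M.+1) : 'M[R]_M.+1 :=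
  \matrix_(j, m) Lam d m (x 0 j).

Lemma D01 (x : 'rV[R]_M.+1) j : Dset eps x -> 0 < x 0 j < 1.
Proof. move=> [H _]; have /andP[a b] := H j; apply/andP; split; first exact: lt_le_trans eps0 a.
by apply: le_lt_trans b _; rewrite ltrBlDr ltrDl.
Qed.

Lemma G_det d x : unisolvent R M.+1 (fun m : 'I_M.+1 => lam R h d m) ->
  Dset eps x -> \det (G d x) != 0.
Proof.
move=> U Dx.
have inj : injective (fun j : 'I_M.+1 => x 0 j).
  move=> i j /eqP xij; apply/eqP; apply: contraTT xij => ij.
  have := (proj2 Dx) i j ij; rewrite -subr_eq0; apply: contraTN => /eqP ->.
  by rewrite normr0 -ltNge.
have := U _ inj (fun j => D01 j Dx).
rewrite -det_tr; congr (_ != 0); congr (\det _); apply/matrixP => i j; rewrite !mxE.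
by rewrite lam_eq // ?(D01 i Dx) // -ltnS.
Qed.

Lemma le_sum_term (I : finType) (F : I -> R) i : (forall j, 0 <= F j) -> F i <= \sum_j F j.
Proof. by move=> H; rewrite (bigD1 i) //= lerDl sumr_ge0. Qed.

Lemma G_cont d x i j : Dset eps x -> {for x, continuous (fun s => G d s i j)}.
Proof.
move=> Dx; rewrite (_ : (fun _ => _) = fun s : 'rV[R]_M.+1 => Lam d j (s 0 i)); last first.
  by apply: funext => s; rewrite mxE.
apply: (continuous_comp (f := fun s : 'rV[R]_M.+1 => s 0 i)).
  exact: coord_continuous.
by apply: Lam_cont; [rewrite -ltnS | exact: D01].
Qed.

Lemma K1 : unisolvent R M.+1 (fun m : 'I_M.+1 => lam R h true m) ->
  unisolvent R M.+1 (fun m : 'I_M.+1 => lam R h false m) ->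
  exists B, forall d x, Dset eps x -> forall i j, `|invmx (G d x) i j| <= B.
Proof.
move=> U1 U0.
have U d : unisolvent R M.+1 (fun m : 'I_M.+1 => lam R h d m) by case: d.
pose phi x := \sum_(d : bool) \sum_i \sum_j `|(\det (G d x))^-1 * \adj (G d x) i j|.
have [B HB] : exists B, forall x, Dset eps x -> `|phi x| <= B.
  apply: cont_bounded; first exact: Dset_compact.
  move=> x Dx; apply: cont_sum => d _; apply: cont_sum => i _; apply: cont_sum => j _.
  apply: (continuous_comp (f := fun s => (\det (G d s))^-1 * \adj (G d s) i j)); last first.
    exact: norm_continuous.
  apply: cont_mul.
    apply: continuousV; first exact: G_det.
    by apply: cont_det => k l; exact: G_cont.
  rewrite (_ : (fun _ => _) = fun s => cofactor (G d s) j i); last first.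
    by apply: funext => s; rewrite mxE.
  by apply: cont_cofactor => k l; exact: G_cont.
exists B => d x Dx i j; apply: le_trans (HB x Dx).
have un : G d x \in unitmx by rewrite unitmxE unitfE; exact: G_det.
rewrite /invmx un mxE.
apply: le_trans (ler_norm _).
apply: le_trans (le_sum_term (F := fun d => \sum_i \sum_j `|(\det (G d x))^-1 * \adj (G d x) i j|) d _); last first.
  by move=> e; apply: sumr_ge0 => k _; apply: sumr_ge0.
apply: le_trans (le_sum_term i _); last by move=> k; apply: sumr_ge0.
apply: le_trans (le_sum_term j _) => //.
Qed.


Local Notation n1 := M.+1.

Lemma sdot_sumsq n (u : 'rV[R]_n) : sdot u u = \sum_j u 0 j ^+ 2.
Proof. by rewrite /sdot mxE; apply: eq_bigr => j _; rewrite mxE expr2. Qed.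

Lemma sdot_row k1 k2 (a : 'rV[R]_k1) (b : 'rV[R]_k2) :
  sdot (row_mx a b) (row_mx a b) = sdot a a + sdot b b.
Proof. by rewrite /sdot tr_row_mx mul_row_col mxE. Qed.

Lemma K2 B d x : (forall i j, `|invmx (G d x) i j| <= B) -> \det (G d x) != 0 ->
  forall w : 'rV[R]_n1, sdot w w <=
    (n1%:R ^+ 2 * B ^+ 2) * sdot (w *m (G d x)^T) (w *m (G d x)^T).
Proof.
move=> HB dn0 w; set y := w *m (G d x)^T.
have un : G d x \in unitmx by rewrite unitmxE unitfE.
have wE : w = y *m (invmx (G d x))^T.
  by rewrite /y -mulmxA -trmx_mul mulVmx // trmx1 mulmx1.
have B0 : 0 <= B by apply: le_trans (HB ord0 ord0).
rewrite !sdot_sumsq.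
have hk k : w 0 k ^+ 2 <= B ^+ 2 * (n1%:R * \sum_j y 0 j ^+ 2).
  have h1 : `|w 0 k| <= B * \sum_j `|y 0 j|.
    rewrite [in X in `|X|]wE mxE mulr_sumr.
    apply: le_trans (ler_norm_sum _ _ _) _; apply: ler_sum => j _.
    by rewrite normrM mulrC mxE; apply: ler_wpM2r; [exact: normr_ge0 | exact: HB].
  have h2 : (\sum_j `|y 0 j|) ^+ 2 <= n1%:R * \sum_j y 0 j ^+ 2.
    apply: le_trans (sq_sum_le (fun j => `|y 0 j|)) _.
    by rewrite le_eqVlt; apply/orP; left; apply/eqP; congr (_ * _); apply: eq_bigr => j _; exact: real_normK (num_real _).
  have h3 : 0 <= \sum_j `|y 0 j| by apply: sumr_ge0 => j _.
  rewrite -real_normK ?num_real //.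
  have h4 : 0 <= `|w 0 k| by [].
  move: h1 h2 h3 h4; set s1 := \sum_j `|y 0 j|; set s2 := \sum_j y 0 j ^+ 2.
  set nw := `|w 0 k|; move=> h1 h2 h3 h4.
  have : nw ^+ 2 <= (B * s1) ^+ 2 by rewrite ler_pXn2r // ?nnegrE ?mulr_ge0.
  rewrite exprMn => h5; apply: le_trans h5 _; apply: ler_wpM2l => //.
  exact: exprn_ge0.
apply: le_trans (ler_sum _ (fun k _ => hk k)) _.
rewrite sumr_const card_ord -mulr_natl.
by rewrite le_eqVlt; apply/orP; left; apply/eqP; ring.
Qed.

Lemma sum_inj_le k n (s : 'I_n -> 'I_k) (f : 'I_k -> R) : injective s ->
  (forall l, 0 <= f l) -> \sum_j f (s j) <= \sum_l f l.
Proof.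
move=> si f0.
have -> : \sum_j f (s j) = \sum_(j in [set: 'I_n]) f (s j) by apply: eq_bigl => j; rewrite in_setT.
rewrite -(big_imset _ (in2W si)).
rewrite [X in _ <= X](bigID (mem (s @: [set: 'I_n]))) /= lerDl.
exact: sumr_ge0.
Qed.

Lemma eig_lb B K (p : 'I_K.+1 -> R) (S : {set 'I_K.+1}) :
  (forall d x, Dset eps x -> forall i j, `|invmx (G d x) i j| <= B) ->
  (forall d x, Dset eps x -> \det (G d x) != 0) ->
  (forall l, eps <= p l <= 1 - eps) ->
  #|S| = n1 -> {in S &, forall j k, j != k -> eps <= `|p j - p k|} ->
  forall a, eigenvalue ((Amat R h M K p)^T *m Amat R h M K p) a ->
  (n1%:R ^+ 2 * B ^+ 2 + 1)^-1 <= a.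
Proof.
move=> HB HD Hp cS Ssep a /eigenvalueP [v vE vn0].
pose s (j : 'I_n1) : 'I_K.+1 := nth ord0 (enum S) j.
have sz : size (enum S) = n1 by rewrite -cardE.
have sS j : s j \in S by rewrite -mem_enum mem_nth // sz.
have sinj : injective s.
  move=> i j /eqP; rewrite /s nth_uniq ?sz ?enum_uniq // => /eqP; exact: val_inj.
pose x := \row_j p (s j) : 'rV[R]_n1.
have Dx : Dset eps x.
  split => [i|i j ij]; rewrite !mxE; first exact: Hp.
  apply: Ssep; [exact: sS | exact: sS |].
  by apply: contraNneq ij => /sinj ->.
have p01 j : 0 < p (s j) < 1 by have := D01 j Dx; rewrite mxE.
set A := Amat R h M K p.
have key : sdot (v *m A^T) (v *m A^T) = a * sdot v v.
  by rewrite /sdot trmx_mul trmxK mulmxA -(mulmxA v) vE -scalemxAl mxE.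
have AT : A^T = block_mx (Ad R h M K true p)^T 0 0 (Ad R h M K false p)^T.
  by rewrite /A /Amat tr_block_mx !trmx0.
have uE : v *m A^T = row_mx (lsubmx v *m (Ad R h M K true p)^T)
                            (rsubmx v *m (Ad R h M K false p)^T).
  by rewrite AT -{1}(hsubmxK v) mul_row_block !mulmx0 addr0 add0r.
have sub d (w : 'rV[R]_n1) : sdot (w *m (G d x)^T) (w *m (G d x)^T) <=
    sdot (w *m (Ad R h M K d p)^T) (w *m (Ad R h M K d p)^T).
  rewrite !sdot_sumsq.
  have e j : (w *m (G d x)^T) 0 j = (w *m (Ad R h M K d p)^T) 0 (s j).
    rewrite !mxE; apply: eq_bigr => m _; rewrite !mxE lam_eq //.
    by rewrite -ltnS.
  rewrite (eq_bigr (fun j => ((w *m (Ad R h M K d p)^T) 0 (s j)) ^+ 2)); last first.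
    by move=> j _; rewrite e.
  apply: (sum_inj_le (f := fun l => ((w *m (Ad R h M K d p)^T) 0 l) ^+ 2)) => //.
  by move=> l; exact: sqr_ge0.
set C := n1%:R ^+ 2 * B ^+ 2.
have C0 : 0 <= C by rewrite /C mulr_ge0 ?sqr_ge0.
have k1 := K2 (HB true x Dx) (HD true x Dx) (lsubmx v).
have k0 := K2 (HB false x Dx) (HD false x Dx) (rsubmx v).
have svv : sdot v v = sdot (lsubmx v) (lsubmx v) + sdot (rsubmx v) (rsubmx v).
  by rewrite -sdot_row hsubmxK.
have pos : 0 < sdot v v.
  rewrite lt_def sdot_ge0 andbT; apply: contraNneq vn0.
  by move/sdot_eq0 => ->.
have a0 : 0 <= a * sdot v v by rewrite -key sdot_ge0.
have a0' : 0 <= a by rewrite -(pmulr_lge0 _ pos).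
have ineq : sdot v v <= C * (a * sdot v v).
  rewrite -key {1}svv uE sdot_row mulrDr.
  apply: lerD.
    apply: le_trans k1 _; apply: ler_wpM2l => //; exact: sub.
  apply: le_trans k0 _; apply: ler_wpM2l => //; exact: sub.
have : 1 <= C * a.
  by rewrite -(ler_pM2r pos) mul1r -mulrA.
move=> h1; have C1 : 0 < C + 1 by rewrite ltr_wpDl.
rewrite -[(C + 1)^-1]mul1r ler_pdivrMr // mulrDr mulr1 mulrC.
by apply: le_trans h1 _; rewrite lerDl.
Qed.
End Lam.

Unset Implicit Arguments.

Theorem lemmaB1 (R : realType) (M K : nat) (h : nat -> R -> R)
  (delta zeta eps : R) (Theta : set 'cV[R]_(M.+1 + M.+1)) :
  (1 <= M)%N ->
  (forall m, (1 <= m <= M)%N ->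
     {within [set x : R^o | 0 < x < 1], continuous (h m : R^o -> R^o)}) ->
  (forall m, (1 <= m <= M)%N ->
     lebesgue_measure.-integrable [set x : R | 0 < x < 1] (EFin \o h m)) ->
  0 < delta -> 0 < zeta -> 0 < eps < 2^-1 ->
  compact (Theta : set 'cV[R^o]_(M.+1 + M.+1)) ->
  interior (Theta : set 'cV[R^o]_(M.+1 + M.+1)) !=set0 ->
  exists c : R, 0 < c /\
    forall (theta : 'cV[R]_(M.+1 + M.+1)) (q p : 'I_K.+1 -> R)
           (mu : bool -> 'I_K.+1 -> probability R R),
      Ps R h M K delta zeta eps Theta theta q p mu ->
      c <= sv_min R _ _ (Amat R h M K p).
Proof.
move=> M1 hc hi d0 z0 /andP[e0 e1] _ _.
case: (pselect (unisolvent R M.+1 (fun m : 'I_M.+1 => lam R h true m) /\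
                unisolvent R M.+1 (fun m : 'I_M.+1 => lam R h false m)))
  => [[U1 U0]|NU]; last first.
  exists 1; split => // theta q p mu [_ [_ [_ [_ [_ [_ [_ [_ [U1 [U0 _]]]]]]]]]].
  by exfalso; apply: NU.
have [B HB] := K1 hi hc e0 U1 U0.
have HD : forall d (x : 'rV[R]_M.+1), Dset eps x -> \det (@G R h M d x) != 0.
  by move=> [] x Dx; [exact: (G_det hi e0 U1 Dx) | exact: (G_det hi e0 U0 Dx)].
set C := M.+1%:R ^+ 2 * B ^+ 2 + 1.
have C0 : 0 < C by rewrite /C ltr_wpDl // mulr_ge0 ?sqr_ge0.
exists (Num.sqrt C^-1); split; first by rewrite sqrtr_gt0 invr_gt0.
move=> theta q p mu [_ [_ [_ [_ [_ [Hp [_ [_ [_ [_ [S [cS Ssep]]]]]]]]]]]].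
rewrite /sv_min; apply: lb_le_inf.
  set A := Amat R h M K p.
  have [a Ha] : exists a, eigenvalue (A^T *m A) a.
    by apply: sym_eig; rewrite ?addnS // trmx_mul trmxK.
  by exists (Num.sqrt a); exists a.
move=> _ [a Ha <-].
have := eig_lb hi e0 HB HD Hp cS Ssep Ha; rewrite -/C => Ca.
rewrite ler_sqrt //; apply: le_trans Ca; by rewrite invr_ge0 ltW.
Qed.
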